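(* Let $r \geq 2$, let $H$ be a digraph (possibly with loops), and let $D$ be an $H$-colored $r$-quasi-transitive digraph such that every directed cycle of length $r+1$ in $D$ is an $H$-cycle. For every $k \geq r$, $D$ has a $(k,H)$-kernel.
   Context: All digraphs are finite. A digraph $D$ is $r$-quasi-transitive if for all distinct $u,v\in V(D)$, whenever there is a directed $uv$-path of length $r$, $u$ and $v$ are joined by an arc (in some direction). $D$ has no loops and comes with a map $\rho: A(D)\to V(H)$. For a walk $W=(x_0,\ldots,x_n)$ in $D$, there is an obstruction on $x_i$ if $(\rho(x_{i-1},x_i),\rho(x_i,x_{i+1})) \notin A(H)$; for an open walk this is considered at internal vertices $x_i$, $1\le i\le n-1$, for a closed walk at all $i\in\{0,\ldots,n-1\}$ with indices modulo $n$. $O_H(W)$ is the set of indices with an obstruction; the $H$-length is $l_H(W)=|O_H(W)|+1$ for open $W$ and $|O_H(W)|$ for closed $W$. An $H$-cycle is a directed cycle with no obstructions. A $(k,H)$-kernel ($k\ge2$) is a set $S\subseteq V(D)$ such that for every two distinct $u,v\in S$ every directed $uv$-path in $D$ has $H$-length at least $k$, and for every $x\in V(D)\setminus S$ there is a directed path from $x$ to a vertex of $S$ of $H$-length at most $k-1$. *)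

(* Defs.v *)
From mathcomp Require Import all_boot.
Set Implicit Arguments. Unset Strict Implicit. Unset Printing Implicit Defensive.

Section Digraphs.
Variables (V VH : finType).
(* D = (V, A); H = (VH, AH) (H may have loops); rho u v is the colour rho(u,v)
   of the arc (u,v) of D (only its values on arcs of D matter). *)
Variables (A : rel V) (AH : rel VH) (rho : V -> V -> VH).

Fixpoint nobs (s : seq V) : nat :=
  match s with
  | a :: ((b :: c :: _) as t) => (~~ AH (rho a b) (rho b c)) + nobs t
  | _ => 0
  end.

Definition Hlength_open (x0 : V) (s : seq V) : nat := (nobs (x0 :: s)).+1.

(* Directed uv-path u :: s (distinct vertices, consecutive arcs, ending at v);
   its length is size s. *)
Definition dpath (u v : V) (s : seq V) : bool :=
  [&& path A u s, uniq (u :: s) & last u s == v].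

Definition dcycle (c : seq V) : bool := (0 < size c) && cycle A c && uniq c.

(* Number of obstructions of the closed walk (x0,...,x_{n-1},x0), counted at
   every index mod n: the triples of (x_{n-1}, x0, ..., x_{n-1}, x0). *)
Definition nobs_closed (c : seq V) : nat :=
  match c with
  | [::] => 0
  | x0 :: _ => nobs (last x0 c :: rcons c x0)
  end.

Definition H_cycle (c : seq V) : Prop := dcycle c /\ nobs_closed c = 0.

Definition r_quasi_transitive (r : nat) : Prop :=
  forall u v s, u != v -> dpath u v s -> size s = r -> A u v || A v u.

Definition kH_kernel (k : nat) (S : {set V}) : Prop :=
  (forall u v s, u \in S -> v \in S -> u != v -> dpath u v s ->
     k <= Hlength_open u s) /\
  (forall x, x \notin S -> exists v s, [/\ v \in S, dpath x v s &
     Hlength_open x s <= k.-1]).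

End Digraphs.

(* Main.v *)
Require Import Defs.
From mathcomp Require Import all_boot.
From mathcomp Require Import zify.
Set Implicit Arguments. Unset Strict Implicit. Unset Printing Implicit Defensive.

Lemma nobs_cons_ge (V VH : finType) (AH : rel VH) (rho : V -> V -> VH) a s :
  nobs AH rho s <= nobs AH rho (a :: s).
Proof. by case: s => [|b [|c t]] //=; rewrite leq_addl. Qed.

Lemma nobs_rcons_ge (V VH : finType) (AH : rel VH) (rho : V -> V -> VH) s z :
  nobs AH rho s <= nobs AH rho (rcons s z).
Proof.
elim: s => [|a s IH] //; case: s IH => [|b [|c t]] // IH.
by rewrite [rcons _ _]/= [nobs _ _ (a :: _)]/= [nobs _ _ (a :: b :: c :: _)]/= leq_add2l.
Qed.

Lemma nobs_cat_ge (V VH : finType) (AH : rel VH) (rho : V -> V -> VH) s1 s2 :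
  nobs AH rho s1 <= nobs AH rho (s1 ++ s2).
Proof.
elim: s2 s1 => [|b s2 IH] s1; first by rewrite cats0.
rewrite -cat_rcons; exact: leq_trans (nobs_rcons_ge _ _ _ b) (IH _).
Qed.

Lemma nobs_size (V VH : finType) (AH : rel VH) (rho : V -> V -> VH) s :
  nobs AH rho s <= (size s).-2.
Proof.
elim: s => [|a s IH] //; case: s IH => [|b [|c t]] // IH.
rewrite [nobs _ _ (a :: _)]/= [size _]/= -add1n.
exact: leq_add (leq_b1 _) IH.
Qed.
Definition WP (V : finType) (A : rel V) (r : nat) (s : seq V) : Prop :=
  forall p1 y w z p2, s = p1 ++ y :: w ++ z :: p2 -> size w = r.-1 -> A z y.

Lemma window_zero (V VH : finType) (A : rel V) (AH : rel VH) (rho : V -> V -> VH) r :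
  2 <= r ->
  (forall c : seq V, dcycle A c -> size c = r.+1 -> H_cycle A AH rho c) ->
  forall y w z p2, size w = r.-1 -> A z y -> sorted A (y :: w ++ z :: p2) ->
  uniq (y :: w ++ z :: p2) -> nobs AH rho (y :: rcons w z) = 0.
Proof.
move=> hr hcyc y w z p2 hw hzy.
have -> : y :: w ++ z :: p2 = (y :: rcons w z) ++ p2 by rewrite /= cat_rcons.
move=> /cat_sorted2 [hs _]; rewrite cat_uniq => /andP [hu _].
have hc : dcycle A (y :: rcons w z).
  rewrite /dcycle hu andbT /= rcons_path last_rcons hzy andbT; exact: hs.
have hsz : size (y :: rcons w z) = r.+1.
  by rewrite /= size_rcons hw; case: r hr {hw hcyc} => [|[|r]].
case: (hcyc _ hc hsz) => _ h0.
apply/eqP; rewrite -leqn0 -h0 /nobs_closed.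
exact: leq_trans (nobs_rcons_ge _ _ _ y) (nobs_cons_ge _ _ _ _).
Qed.

Lemma nobs_cons3 (V VH : finType) (AH : rel VH) (rho : V -> V -> VH) a b c t :
  nobs AH rho [:: a, b, c & t] = ~~ AH (rho a b) (rho b c) + nobs AH rho [:: b, c & t].
Proof. by []. Qed.

Lemma nobs_WP (V VH : finType) (A : rel V) (AH : rel VH) (rho : V -> V -> VH) r :
  2 <= r ->
  (forall c : seq V, dcycle A c -> size c = r.+1 -> H_cycle A AH rho c) ->
  forall s, sorted A s -> uniq s -> WP A r s -> r < size s -> nobs AH rho s = 0.
Proof.
move=> hr hcyc; elim=> [|a t IH] // hs hu hW hsz.
have hsz' : r <= size t by [].
have hdrop : 0 < size (drop r.-1 t) by rewrite size_drop; lia.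
case hd: (drop r.-1 t) hdrop => [|z p2] // _.
set w := take r.-1 t.
have ht : t = w ++ z :: p2 by rewrite -hd cat_take_drop.
have hw : size w = r.-1.
  rewrite size_take; case: ifP => //; lia.
have hzy : A z a by apply: (hW [::] a w z p2); rewrite //= -ht.
have hs' := hs; have hu' := hu.
rewrite ht in hs' hu'.
have h0 := window_zero hr hcyc hw hzy hs' hu'.
have hp2 : size t = r -> p2 = [::].
  move=> e; apply/eqP; rewrite -size_eq0.
  have := congr1 size ht; rewrite size_cat /= hw e.
  lia.
have [e|ne] := eqVneq (size t) r.
  by rewrite ht (hp2 e) cats1.
have hlt : r < size t by rewrite ltn_neqAle eq_sym ne hsz'.
have hIH : nobs AH rho t = 0.
  apply: IH => //; first exact: path_sorted hs.
    by case/andP: hu.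
  move=> p1 y w' z' p2' e hw'; apply: (hW (a :: p1) y w' z' p2') => //; by rewrite e.
have hX : a :: t = (a :: rcons w z) ++ p2 by rewrite ht /= cat_rcons.
have h3 : take 3 (a :: t) = take 3 (a :: rcons w z).
  rewrite hX takel_cat //= size_rcons hw; lia.
have hle : nobs AH rho (take 3 (a :: rcons w z)) <= 0.
  apply: leq_trans (nobs_cat_ge _ _ _ (drop 3 (a :: rcons w z))) _.
  by rewrite cat_take_drop h0.
move: hle; rewrite -h3.
case: t {IH hs hu hW hsz hsz' hd w ht hw hzy hs' hu' h0 hp2 ne hlt hX h3} hIH => [|b [|c t']] // hI.
rewrite [take _ _]/= take0 [nobs _ _ (a :: _)]/= addn0 leqn0 => /eqP h1.
by rewrite nobs_cons3 h1 hI.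
Qed.

Lemma short_path (V VH : finType) (A : rel V) (AH : rel VH) (rho : V -> V -> VH) r :
  2 <= r -> r_quasi_transitive A r ->
  (forall c : seq V, dcycle A c -> size c = r.+1 -> H_cycle A AH rho c) ->
  forall x v, x != v -> connect A x v ->
  exists p, dpath A x v p /\ Hlength_open AH rho x p <= r.-1.
Proof.
move=> hr hqt hcyc x v hxv /connectP [p0 hp0 hv].
pose gs (s : seq V) := [&& sorted A s, uniq s, ohead s == Some x & last x s == v].
pose P n := [exists t : n.-tuple V, gs t].
have gsP : forall s, gs s -> P (size s).
  by move=> s hs; apply/existsP; exists (in_tuple s).
have exP : exists n, P n.
  case: (shortenP hp0) hv => p' hp' hu' _ hv.
  exists (size (x :: p')); apply: gsP.
  by rewrite /gs /= hp' -hv !eqxx /= andbT; exact: hu'.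
case: (ex_minnP exP) => n /existsP [t ht] hmin.
have {ht hmin} [s [hs hmin]] : exists s, gs s /\ forall s', gs s' -> size s <= size s'.
  exists t; split => // s' hs'; rewrite size_tuple; exact: hmin (gsP _ hs').
case/and4P: hs => hso hun hhd hla.
have hW : WP A r s.
  move=> p1 y w z p2 e hw.
  move: hso hun; rewrite e => hso hun.
  have hyz : y != z.
    move: hun; rewrite cat_uniq => /and3P [_ _] /= /andP [hy _].
    by apply/eqP => eyz; move: hy; rewrite mem_cat eyz inE eqxx orbT.
  have hpath : path A y (w ++ z :: p2) by move: hso; rewrite sorted_cat_cons => /andP [].
  have hd : dpath A y z (rcons w z).
    rewrite /dpath last_rcons eqxx andbT; apply/andP; split.
      by move: hpath; rewrite -cat_rcons cat_path => /andP [].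
    move: hun; rewrite cat_uniq => /and3P [_ _]; rewrite -cat_rcons -cat_cons cat_uniq.
    by case/andP.
  have := hqt y z (rcons w z) hyz hd; rewrite size_rcons hw prednK; last by lia.
  move=> /(_ erefl); case/orP => // hyz'.
  pose s' := p1 ++ [:: y, z & p2].
  have hgs : gs s'.
    apply/and4P; split.
    - move: hso; rewrite /s' !sorted_cat_cons => /andP [-> _] /=; rewrite hyz' /=.
      by move: hpath; rewrite cat_path => /andP [_] /= /andP [].
    - apply: subseq_uniq hun; apply: cat_subseq (subseq_refl p1) _.
      by rewrite /= eqxx; exact: suffix_subseq.
    - by move: hhd; rewrite /s' e; case: (p1).
    - by move: hla; rewrite /s' e !last_cat /= last_cat.
  have := hmin _ hgs; rewrite e /s' !size_cat /= size_cat /= hw; lia.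
case: s hso hun hhd hla hW {hmin} => [|a p] // hso hun /eqP [ea] hla hW.
subst a; exists p; split; first by rewrite /dpath -(eqP hla); apply/and3P.
rewrite /Hlength_open.
have [hlt|hge] := ltnP r (size (x :: p)).
  by rewrite (nobs_WP hr hcyc hso hun hW hlt); lia.
have := nobs_size AH rho (x :: p); move: hge hr; move: (size (x :: p)) (nobs AH rho (x :: p)) => m q; rewrite -!subn1; lia.
Qed.

Theorem theorem22 (V VH : finType) (A : rel V) (AH : rel VH)
    (rho : V -> V -> VH) (r : nat) :
  2 <= r ->
  irreflexive A ->
  r_quasi_transitive A r ->
  (forall c : seq V, dcycle A c -> size c = r.+1 -> H_cycle A AH rho c) ->
  forall k : nat, r <= k -> exists S : {set V}, kH_kernel A AH rho k S.
Proof.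
move=> hr hirr hqt hcyc k hk.
pose reach y := [set z | connect A y z].
pose mu y := #|reach y| * #|V| + enum_rank y.
exists [set u | [forall y, connect A u y ==> (connect A y u && (enum_rank u <= enum_rank y))]].
split.
  move=> u v s hu hv huv /and3P [hp _ /eqP hl]; exfalso.
  have cuv : connect A u v by apply/connectP; exists s.
  rewrite inE in hu; rewrite inE in hv.
  move/forallP/(_ v)/implyP/(_ cuv)/andP: hu => [cvu ru].
  move/forallP/(_ u)/implyP/(_ cvu)/andP: hv => [_ rv].
  have : enum_rank u = enum_rank v by apply/val_inj/eqP; rewrite eqn_leq ru rv.
  by move/enum_rank_inj => e; rewrite e eqxx in huv.
move=> x hx.
case: (@arg_minnP _ x (connect A x) mu (connect0 A x)) => v cxv hmin.
have hvS : v \in [set u | [forall y, connect A u y ==> (connect A y u && (enum_rank u <= enum_rank y))]].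
  rewrite inE; apply/forallP => y; apply/implyP => cvy.
  have cxy := connect_trans cxv cvy.
  have hm := hmin y cxy.
  have sub : reach y \subset reach v.
    by apply/subsetP => z; rewrite !inE; exact: connect_trans cvy.
  have card := subset_leq_card sub.
  have rv := ltn_ord (enum_rank v); have ry := ltn_ord (enum_rank y).
  move: hm; rewrite /mu.
  move: (enum_rank v : nat) (enum_rank y : nat) rv ry => a b ha hb hm.
  have eqc : #|reach y| = #|reach v|.
    move: hm card ha hb; move: #|reach y| #|reach v| #|V| => m1 m2 nn; nia.
  have ey : reach y = reach v by apply/eqP; rewrite eqEcard sub eqc leqnn.
  have : v \in reach y by rewrite ey inE connect0.
  rewrite inE => -> /=; move: hm; rewrite eqc; lia.
have hxv : x != v by apply: contraNneq hx => ->.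
case: (@short_path V VH A AH rho r hr hqt hcyc x v hxv cxv) => p [hd hl].
exists v, p; split => //; apply: leq_trans hl _; lia.
Qed.
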